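(* Let $X$ be a real Banach space, let $A\subset X\times X^*$ be self-cancelling and suppose $A^\vdash$ is monotone. Then $A^\vdash$ is maximal monotone.
   Context: $\langle x,x^*\rangle=x^*(x)$. $A$ is self-cancelling if it is a linear subspace of $X\times X^*$ with $\langle x,x^*\rangle=0$ for all $(x,x^* )\in A$. $B^\vdash=\{(y,y^* )\mid \langle x,y^*\rangle+\langle y,x^*\rangle=0\ \forall (x,x^* )\in B\}$. A set $T\subset X\times X^*$ is monotone if $\langle x-y,x^*-y^*\rangle\ge0$ for all $(x,x^* ),(y,y^* )\in T$, and maximal monotone if it is monotone and not properly contained in any monotone set. *)

(* Defs.v *)
From HB Require Import structures.
From mathcomp Require Import all_boot all_order all_algebra.
From mathcomp Require Import all_classical all_reals all_analysis.
Set Implicit Arguments. Unset Strict Implicit. Unset Printing Implicit Defensive.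
Import Order.TTheory GRing.Theory Num.Theory.
Import numFieldNormedType.Exports.
Local Open Scope classical_set_scope.
Local Open Scope ring_scope.

(* The dual space Xdual is represented as the set of continuous linear
   functionals X -> R; elements of X x Xdual are pairs (x, xd) with
   xd : X -> R satisfying [is_dual]. *)
Definition is_dual (R : realType) (X : normedModType R) (f : X -> R) : Prop :=
  (forall (a : R) (x y : X), f (a *: x + y) = a * f x + f y) /\ continuous f.

Definition dpair (R : realType) (X : normedModType R) (x : X) (f : X -> R) : R := f x.

Definition XXs (R : realType) (X : normedModType R) : set (X * (X -> R)) :=
  [set p | is_dual p.2].

Definition is_subspace (R : realType) (X : normedModType R)
  (A : set (X * (X -> R))) : Prop :=
  A `<=` @XXs R X /\ A (0, fun _ => 0) /\
  forall (a : R) (p q : X * (X -> R)), A p -> A q ->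
    A (a *: p.1 + q.1, fun z => a * p.2 z + q.2 z).

Definition self_cancelling (R : realType) (X : normedModType R)
  (A : set (X * (X -> R))) : Prop :=
  is_subspace A /\ forall p, A p -> dpair p.1 p.2 = 0.

Definition perp (R : realType) (X : normedModType R)
  (B : set (X * (X -> R))) : set (X * (X -> R)) :=
  [set q | @XXs R X q /\ forall p, B p -> dpair p.1 q.2 + dpair q.1 p.2 = 0].

Definition monotone_set (R : realType) (X : normedModType R)
  (T : set (X * (X -> R))) : Prop :=
  T `<=` @XXs R X /\
  forall p q, T p -> T q -> 0 <= dpair (p.1 - q.1) (fun z => p.2 z - q.2 z).

Definition maximal_monotone (R : realType) (X : normedModType R)
  (T : set (X * (X -> R))) : Prop :=
  monotone_set T /\
  forall T', monotone_set T' -> T `<=` T' -> T' = T.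

(* Main.v *)
Require Import Defs.
From mathcomp Require Import all_boot all_order all_algebra.
From mathcomp Require Import all_classical all_reals all_analysis.
From mathcomp Require Import lra.
Import Order.TTheory GRing.Theory Num.Theory.
Local Open Scope classical_set_scope.
Local Open Scope ring_scope.

Section H.
Variables (R : realType) (X : normedModType R) (f : X -> R).
Hypothesis hf : forall (a : R) (x y : X), f (a *: x + y) = a * f x + f y.
Lemma f0 : f 0 = 0.
Proof. have := hf 1 0 0; rewrite scaler0 addr0 mul1r => h. lra. Qed.
Lemma fD x y : f (x + y) = f x + f y.
Proof. by rewrite -[x in LHS]scale1r hf mul1r. Qed.
Lemma fZ a x : f (a *: x) = a * f x.
Proof. by rewrite -[a *: x]addr0 hf f0 addr0. Qed.
Lemma fB x y : f (x - y) = f x - f y.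
Proof. by rewrite -scaleN1r fD fZ; lra. Qed.
End H.

Theorem lemma4 (R : realType) (X : completeNormedModType R)
  (A : set (X * (X -> R))) :
  self_cancelling A -> monotone_set (perp A) -> maximal_monotone (perp A).
Proof.
move=> [[AX [A0 Acl]] Asc] Hmon; split => // T' [T'X T'mon] sub.
have Aperp : A `<=` perp A.
  move=> q Aq; split; first exact: AX.
  move=> p Ap; rewrite /Defs.dpair.
  have := Asc _ (Acl 1 p q Ap Aq); rewrite /Defs.dpair /=.
  have [hp _] := AX _ Ap; have [hq _] := AX _ Aq.
  rewrite /Defs.dpair !scale1r !mul1r !(@fD _ _ _ hp) !(@fD _ _ _ hq).
  have := Asc _ Ap; have := Asc _ Aq; rewrite /Defs.dpair => e1 e2. lra.
apply/seteqP; split => // y Ty; split; first exact: T'X.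
move=> p Ap; rewrite /Defs.dpair.
have [hy _] := T'X _ Ty; have [hp _] := AX _ Ap.
have ep := Asc _ Ap; rewrite /Defs.dpair in ep.
set c := p.2 y.1 + y.2 p.1.
set a := y.2 y.1.
have key : forall t, 0 <= a - t * c.
  move=> t.
  have At := Acl t p (0, fun _ => 0) Ap A0.
  have := T'mon _ _ Ty (sub _ (Aperp _ At)); rewrite /Defs.dpair /=.
  rewrite addr0 !addr0 (@fB _ _ _ hy) (@fZ _ _ _ hy) (@fB _ _ _ hp) (@fZ _ _ _ hp) ep.
  rewrite /a /c; lra.
apply/eqP; apply/negPn/negP => cn0.
have := key ((a + 1) / c).
rewrite divfK //.
- lra.
- have -> : c = y.2 p.1 + p.2 y.1 by rewrite /c addrC.
  exact: cn0.
Qed.
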